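(* Let $(G,u,v,\alpha,\beta)$ be a Guvab with $\lim_{k\to\infty}W_k=1$ and $\beta<1$. Then $\rho(G,u,v,\alpha,\beta)\ge\frac{d(u,v)}{2}-1$.
   Context: A Guvab is a tuple $(G,u,v,\alpha,\beta)$ where $G$ is a finite, connected, simple graph, $u,v\in V(G)$, and $\alpha,\beta\in[0,1]$ with $\alpha\le\beta$. A random walk on $G$ with starting vertex $w$ and laziness $\gamma$ is the Markov chain $R_0=w$ and, for $i\ge1$, $R_i=R_{i-1}$ with probability $\gamma$ and $R_i=t$ with probability $\frac{1-\gamma}{\deg(R_{i-1})}$ for each neighbor $t$ of $R_{i-1}$. $\mu_k$ is the distribution after $k$ steps of the walk from $u$ with laziness $\alpha$, $\nu_k$ that of the walk from $v$ with laziness $\beta$, and $W_k=W(\mu_k,\nu_k)$ is the Wasserstein ($L^1$ optimal transport) distance with respect to the graph distance $d$: the minimum over transportation plans (nonnegative $T$ on $V(G)\times V(G)$ with marginals $\mu_k,\nu_k$) of $\sum d(w_1,w_2)T(w_1,w_2)$. For a Guvab with $W_k\to1$, $\rho=\inf\{N\in\mathbb{Z}: W_k=1\text{ for all }k\ge N\}$. *)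

(* Defs.v *)
From HB Require Import structures.
From mathcomp Require Import all_boot all_order all_algebra.
From mathcomp Require Import all_classical all_reals all_analysis.
Set Implicit Arguments. Unset Strict Implicit. Unset Printing Implicit Defensive.
Import Order.TTheory GRing.Theory Num.Theory.
Local Open Scope ring_scope.

Section Guvab.
Variable T : finType.
Variable e : rel T.

Definition simple_graph : Prop := irreflexive e /\ symmetric e.
Definition connected_graph : Prop := forall x y : T, connect e x y.

(* graph distance: least n such that there is an e-path of n steps from x to y
   (for a connected graph, d(x,y) < #|T|, so the search over iota 0 #|T| is exact) *)
Definition gdist (x y : T) : nat :=
  find (fun n => [exists p : n.-tuple T, path e x p && (last x p == y)])
       (iota 0 #|T|).

Definition deg (x : T) : nat := #|[set y | e x y]|.

Variable R : realType.

Definition trans (g : R) (x y : T) : R :=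
  if x == y then g else if e x y then (1 - g) / (deg x)%:R else 0.

Fixpoint walk_dist (w : T) (g : R) (k : nat) : T -> R :=
  match k with
  | 0 => fun y => (y == w)%:R
  | k'.+1 => fun y => \sum_(x : T) walk_dist w g k' x * trans g x y
  end.

Definition is_plan (mu nu : T -> R) (pi : T -> T -> R) : Prop :=
  [/\ forall a b, 0 <= pi a b,
      forall a, \sum_(b : T) pi a b = mu a &
      forall b, \sum_(a : T) pi a b = nu b].

Definition plan_cost (pi : T -> T -> R) : R :=
  \sum_(a : T) \sum_(b : T) (gdist a b)%:R * pi a b.

(* L^1 Wasserstein distance: the minimum (= infimum, which is attained)
   of the transport cost over all transportation plans *)
Definition wasserstein (mu nu : T -> R) : R :=
  inf [set c | exists pi, is_plan mu nu pi /\ c = plan_cost pi].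

Definition W (u v : T) (alpha beta : R) (k : nat) : R :=
  wasserstein (walk_dist u alpha k) (walk_dist v beta k).

End Guvab.

(* Main.v *)
Require Import Defs.
From HB Require Import structures.
From mathcomp Require Import all_boot all_order all_algebra.
From mathcomp Require Import all_classical all_reals all_analysis.
From mathcomp Require Import lra.
Import Order.TTheory GRing.Theory Num.Theory.
Import numFieldNormedType.Exports.
Local Open Scope ring_scope.
Local Open Scope classical_set_scope.

Section Helpers.
Variables (T : finType) (e : rel T).

Definition Pn (n : nat) (x y : T) : Prop :=
  exists p : seq T, [/\ size p = n, path e x p & last x p = y].

Lemma Pn_gdist n x y : Pn n x y -> (gdist e x y <= n)%N.
Proof.
case=> p [sz pth lst]; rewrite /gdist.
case: (ltnP n #|T|) => hn.
- have Ht : [exists t : n.-tuple T, path e x t && (last x t == y)].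
    apply/existsP. have szp : size p == n by rewrite sz.
    exists (Tuple szp) => /=. by rewrite pth lst eqxx.
  rewrite leqNgt; apply/negP => /(before_find 0%N).
  by rewrite nth_iota // add0n /= Ht.
- apply: leq_trans (find_size _ _) _. by rewrite size_iota.
Qed.

Lemma gdist_P x y : connected_graph e -> Pn (gdist e x y) x y.
Proof.
move=> /(_ x y) /connectP [p pth ->].
case: (shortenP pth) => p' pth' uq _.
have hs : (size p' < #|T|)%N.
  have := max_card (mem (x :: p')).
  by rewrite (card_uniqP uq).
rewrite /gdist.
set a := (fun n : nat => _).
have hh : has a (iota 0 #|T|).
  apply/hasP; exists (size p'); first by rewrite mem_iota.
  rewrite /a; apply/existsP. have szp : size p' == size p' by [].
  exists (Tuple szp) => /=. by rewrite pth' eqxx.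
have := nth_find 0%N hh.
rewrite nth_iota ?add0n; last by have := hh; rewrite has_find size_iota.
move/existsP => [t /andP [pt /eqP lt]].
by exists (val t); split; rewrite ?size_tuple.
Qed.

Lemma Pn0 x : Pn 0 x x.
Proof. by exists [::]. Qed.

Lemma Pn_cat n1 n2 x z y : Pn n1 x z -> Pn n2 z y -> Pn (n1 + n2) x y.
Proof.
case=> p1 [s1 h1 l1] [p2 [s2 h2 l2]]; exists (p1 ++ p2); split.
- by rewrite size_cat s1 s2.
- by rewrite cat_path h1 l1 h2.
- by rewrite last_cat l1.
Qed.

Lemma Pn_step n x y z : Pn n x y -> e y z -> Pn n.+1 x z.
Proof.
case=> p [s h l] eyz; exists (rcons p z); split.
- by rewrite size_rcons s.
- by rewrite rcons_path h l eyz.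
- by rewrite last_rcons.
Qed.

Lemma Pn_rev n x y : symmetric e -> Pn n x y -> Pn n y x.
Proof.
move=> sym; elim: n x y => [|n IH] x y.
  by case=> p [s h l]; move: s h l; case: p => //= _ _ <-; apply: Pn0.
case=> p [s h l]; move: s h l; case: p => //= z p [s] /andP [exz h] l.
have : Pn n z y by exists p.
move=> /IH hzy.
have h2 : Pn n.+1 y x by apply: (@Pn_step n y z x hzy); rewrite sym.
by [].
Qed.

Variable R : realType.

Lemma sum_neq0 (F : T -> R) : \sum_i F i != 0 -> exists i, F i != 0.
Proof.
move=> h; case: (pselect (exists i, F i != 0)) => // hn.
have h0 : \sum_i F i = 0.
  apply: big1 => i _; case: (eqVneq (F i) 0) => // hi; exfalso; apply: hn; by exists i.
by rewrite h0 eqxx in h.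
Qed.

Lemma walk_supp w (g : R) k y : walk_dist e w g k y != 0 ->
  exists2 n, (n <= k)%N & Pn n w y.
Proof.
elim: k y => [|k IH] y /=.
  by case: (eqVneq y w) => [-> _|_]; [exists 0%N => //; apply: Pn0 | rewrite eqxx].
move=> /sum_neq0 [x]; rewrite mulf_eq0 negb_or => /andP [hx ht].
case: (IH x hx) => n hn hP.
move: ht; rewrite /trans; case: (eqVneq x y) => [<- _|_].
  by exists n => //; apply: leqW.
case: ifP => [exy _|]; last by rewrite eqxx.
by exists n.+1 => //; apply: Pn_step exy.
Qed.

Hypothesis irr : irreflexive e.
Hypothesis degp : forall x, (0 < deg e x)%N.

Lemma trans_sum (g : R) x : \sum_y trans e g x y = 1.
Proof.
rewrite (bigD1 x) //= /trans eqxx.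
rewrite (eq_bigr (fun y => if e x y then (1-g)/(deg e x)%:R else 0)); last first.
  by move=> y hy; rewrite eq_sym (negbTE hy).
rewrite -big_mkcondr /=.
rewrite (eq_bigl (fun y => y \in [set z | e x z]%SET)); last first.
  move=> y; rewrite inE; case exy: (e x y); rewrite ?andbF ?andbT //.
  by apply/eqP => eq; rewrite eq irr in exy.
rewrite sumr_const -/(deg e x) -[_ *+ _]mulr_natr divfK; first by rewrite addrC subrK.
by rewrite pnatr_eq0 -lt0n degp.
Qed.

Lemma walk_sum w (g : R) k : \sum_y walk_dist e w g k y = 1.
Proof.
elim: k => [|k IH] /=.
  by rewrite (bigD1 w) //= eqxx big1 ?addr0 // => y /negbTE ->.
rewrite exchange_big /= -[RHS]IH; apply: eq_bigr => x _.
by rewrite -mulr_sumr trans_sum mulr1.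
Qed.

End Helpers.
Arguments Pn_gdist {T e n x y}.
Arguments gdist_P {T e} x y.
Arguments Pn0 {T} e x.
Arguments Pn_cat {T e n1 n2 x z y}.
Arguments Pn_rev {T e n x y}.
Arguments walk_supp {T e R w g k y}.
Arguments walk_sum {T e R} irr degp w g k.

(* rho >= d(u,v)/2 - 1, where rho = inf{N : W_k = 1 for all k >= N},
   stated as: every such N is >= d(u,v)/2 - 1 *)
Theorem lemma4p14 (R : realType) (T : finType) (e : rel T) (u v : T)
    (alpha beta : R) :
  simple_graph e -> connected_graph e ->
  0 <= alpha -> alpha <= beta -> beta <= 1 ->
  beta < 1 ->
  (fun k => W e u v alpha beta k) @ \oo --> (1 : R) ->
  forall N : nat, (forall k : nat, (N <= k)%N -> W e u v alpha beta k = 1) ->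
    (gdist e u v)%:R / 2 - 1 <= (N%:R : R).
Proof.
move=> [irr sym] conn ha hab hb1 hb _ N HN.
set D := gdist e u v.
have N0 : (0 : R) <= N%:R by [].
case: (posnP D) => [D0 | Dpos].
  by rewrite D0 /= mul0r sub0r; lra.
have uv : u != v.
  apply/negP => /eqP eq; move: Dpos; rewrite /D eq.
  by have := Pn_gdist (Pn0 e v); rewrite leqn0 => /eqP ->.
have degp : forall x, (0 < deg e x)%N.
  move=> x.
  have [y yx] : exists2 y, y != x & True.
    case: (eqVneq x u) => [->|xu]; first by exists v; rewrite // eq_sym.
    by exists u; rewrite // eq_sym.
  move: (conn x y) => /connectP [p].
  case: p => [_ /= yeq|z p /= /andP [exz _] _]; first by rewrite yeq eqxx in yx.
  move=> _; rewrite /deg card_gt0; apply/set0Pn; exists z; by rewrite inE.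
have W1 := HN N (leqnn N); rewrite /W /wasserstein in W1.
set S := [set c | _] in W1.
case: (pselect (S !=set0)) => [ne|em]; last first.
  have S0 : S = set0.
    by apply/seteqP; split => c // hc; apply: em; exists c.
  by move: W1; rewrite S0 inf0 => /eqP; rewrite eq_sym oner_eq0.
have lb : lbound S (D%:R - 2 * N%:R).
  move=> c [pi [[p0 pr pc] ->]]; rewrite /plan_cost.
  have key : forall a b, pi a b != 0 -> (D <= N + gdist e a b + N)%N.
    move=> a b nz.
    have pab : 0 < pi a b by rewrite lt0r nz p0.
    have ma : walk_dist e u alpha N a != 0.
      rewrite -pr; apply: lt0r_neq0; apply: lt_le_trans pab _.
      rewrite (bigD1 b) //= lerDl; apply: sumr_ge0 => *; exact: p0.
    have mb : walk_dist e v beta N b != 0.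
      rewrite -pc; apply: lt0r_neq0; apply: lt_le_trans pab _.
      rewrite (bigD1 a) //= lerDl; apply: sumr_ge0 => *; exact: p0.
    case: (walk_supp ma) => n1 hn1 P1.
    case: (walk_supp mb) => n2 hn2 /(Pn_rev sym) P2.
    have := Pn_gdist (Pn_cat (Pn_cat P1 (gdist_P a b conn)) P2).
    move=> h; apply: leq_trans h _.
    by rewrite leq_add // leq_add2r.
  have -> : D%:R - 2 * N%:R =
      \sum_a \sum_b (D%:R - 2 * N%:R) * pi a b :> R.
    rewrite -[LHS]mulr1 -(walk_sum irr degp u alpha N) mulr_sumr.
    by apply: eq_bigr => a _; rewrite -pr mulr_sumr.
  apply: ler_sum => a _; apply: ler_sum => b _.
  case: (eqVneq (pi a b) 0) => [->|nz]; first by rewrite !mulr0.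
  apply: ler_wpM2r; first exact: p0.
  have := key a b nz; rewrite -(ler_nat R) !natrD => h.
  lra.
have := lb_le_inf ne lb; rewrite W1 => h.
lra.
Qed.
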